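(* Let $\Omega$ be a set system on a set $E$ of size $m$, and let $k$ be a positive integer. Then, as polynomials in $q$, $$R_{k\Omega}(q)=\big((1-q)^k+kq(1-q)^{k-1}\big)^m\,R_\Omega\!\left(\frac{kq}{1+(k-1)q}\right).$$
   Context: A set system $\Omega$ on a finite set $E$ is a collection of subsets of $E$ (its faces). Its reliability function $R_\Omega(q)$ is the probability that, when each element of $E$ is selected independently with probability $q$, the set of selected elements is a face. Equivalently, $R_\Omega(q)=\sum_i f_iq^i(1-q)^{|E|-i}$, where $f_i$ is the number of faces of size $i$. For a positive integer $k$, $k\Omega$ is the set system on $E\times\{1,\ldots,k\}$ in which $\{(e_1,i_1),\ldots,(e_r,i_r)\}$ is a face if and only if $e_1,\ldots,e_r$ are pairwise distinct and $\{e_1,\ldots,e_r\}\in\Omega$. *)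

(* Defs.v *)
From HB Require Import structures.
From mathcomp Require Import all_boot all_order all_algebra.
Set Implicit Arguments. Unset Strict Implicit. Unset Printing Implicit Defensive.
Import Order.TTheory GRing.Theory Num.Theory.
Local Open Scope ring_scope.

Definition reliability (R : nzRingType) (E : finType) (Om : {set {set E}}) : {poly R} :=
  \sum_(S in Om) 'X ^+ #|S| * (1 - 'X) ^+ (#|E| - #|S|)%N.

(* k Om : set system on E x {1..k} (here E * 'I_k); a set F is a face iff its
   first coordinates are pairwise distinct and form a face of Om. *)
Definition kfold (E : finType) (k : nat) (Om : {set {set E}}) : {set {set (E * 'I_k)}} :=
  [set F : {set (E * 'I_k)} |
     [forall x in F, forall y in F, (x.1 == y.1) ==> (x == y)]
     && ((fun p : E * 'I_k => p.1) @: F \in Om)].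

(* Main.v *)
Require Import Defs.
From HB Require Import structures.
From mathcomp Require Import all_boot all_order all_algebra.
From mathcomp Require Import ring lra zify.
Set Implicit Arguments. Unset Strict Implicit.
Import Order.TTheory GRing.Theory Num.Theory.
Local Open Scope ring_scope.


Definition injF (E : finType) (k : nat) (F : {set E * 'I_k}) :=
  [forall x in F, forall y in F, (x.1 == y.1) ==> (x == y)].
Definition projF (E : finType) (k : nat) (F : {set E * 'I_k}) := (fun p : E * 'I_k => p.1) @: F.

Definition phi (E : finType) (k : nat) (g : {ffun E -> option 'I_k}) : {set E * 'I_k} :=
  [set p | g p.1 == Some p.2].

Lemma phi_inj (E : finType) (k : nat) : injective (@phi E k).
Proof.
move=> g h eq; apply/ffunP => e.
case Hg: (g e) => [i|].
  have : (e, i) \in phi g by rewrite inE Hg.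
  by rewrite eq inE /= => /eqP.
case Hh: (h e) => [j|] //.
have : (e, j) \in phi h by rewrite inE Hh.
by rewrite -eq inE /= Hg.
Qed.

Lemma injF_card (E : finType) (k : nat) (F : {set E * 'I_k}) : injF F -> #|F| = #|projF F|.
Proof.
move=> /forallP H; rewrite card_in_imset // => x y xF yF /= e.
by have /forallP/(_ y)/implyP/(_ yF)/implyP/(_ (introT eqP e))/eqP := implyP (H x) xF.
Qed.

Definition RS (k : nat) := [set Some i | i : 'I_k].

Lemma card_Fs (E : finType) (k : nat) (S : {set E}) :
  #|[set F : {set E * 'I_k} | injF F & projF F == S]| = (k ^ #|S|)%N.
Proof.
have -> : [set F : {set E * 'I_k} | injF F & projF F == S] = (@phi E k) @: pffun_on None S (mem (RS k)).
  apply/setP => F; rewrite inE; apply/andP/imsetP.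
  - move=> [/forallP H /eqP PS].
    exists [ffun e => [pick i | (e, i) \in F]].
      apply/pffun_onP; split.
        apply/subsetP => e; rewrite !inE ffunE.
        case: pickP => // i Fi _; rewrite -PS; apply/imsetP; by exists (e, i).
      move=> o /mapP [e eS ->]; rewrite ffunE.
      move: eS; rewrite mem_enum -PS => /imsetP [[e' i] Fi /= ->].
      case: pickP => [j _|/(_ i)]; last by rewrite Fi.
      by apply/imsetP; exists j.
    apply/setP => [[e i]]; rewrite inE /= ffunE.
    case: pickP => [j Fj|none]; last by rewrite none.
    apply/idP/idP; last by move=> /eqP [<-].
    move=> Fi; apply/eqP; congr Some.
    have /forallP/(_ (e, i))/implyP/(_ Fi)/implyP/(_ (eqxx _))/eqP := implyP (H (e, j)) Fj.
    by case.
  - move=> [g /pffun_onP [Hsup Hval] ->]; split.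
      apply/forallP => [[e i]]; apply/implyP; rewrite inE /= => /eqP gi.
      apply/forallP => [[e' j]]; apply/implyP; rewrite inE /= => /eqP gj.
      apply/implyP => /= /eqP ee; subst e'.
      by move: gj; rewrite gi => -[->].
    apply/eqP/setP => e; apply/imsetP/idP.
      move=> [[e' i]]; rewrite inE /= => /eqP gi ->.
      apply: (subsetP Hsup); by rewrite inE gi.
    move=> eS; have : g e \in mem (RS k) by apply: Hval; apply: map_f; rewrite mem_enum.
    move=> /imsetP [i _ gi]; exists (e, i) => //; by rewrite inE gi.
rewrite card_imset; last exact: phi_inj.
rewrite card_pffun_on card_imset; last by move=> ?? [].
by rewrite card_ord.
Qed.


Theorem lemma6p1 (R : realFieldType) (E : finType) (Om : {set {set E}})
    (m k : nat) (hm : #|E| = m) (hk : (0 < k)%N) (q : R)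
    (hq : 1 + (k%:R - 1) * q != 0) :
  (reliability R (kfold k Om)).[q] =
  ((1 - q) ^+ k + k%:R * q * (1 - q) ^+ (k - 1)) ^+ m *
  (reliability R Om).[k%:R * q / (1 + (k%:R - 1) * q)].
Proof.
rewrite /reliability !horner_sum.
rewrite (partition_big (@projF E k) (mem Om)); last first.
  by move=> F; rewrite inE => /andP [].
rewrite mulr_sumr; apply: eq_bigr => S SOm.
rewrite (eq_bigl (fun F => F \in [set F | injF F & projF F == S])); last first.
  move=> F; rewrite !inE /injF /projF.
  by case: eqP => [->|_]; rewrite ?andbF // -andbA; congr (_ && _); move: SOm; rewrite inE => ->.
rewrite (eq_bigr (fun _ => q ^+ #|S| * (1-q)^+ (#|{: E * 'I_k}| - #|S|))); last first.
  by move=> F; rewrite inE => /andP [iF /eqP <-]; rewrite !hornerE injF_card.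
rewrite sumr_const card_Fs !hornerE /=.
rewrite card_prod card_ord hm.
have sm : (#|S| <= m)%N by rewrite -hm max_card.
set s := #|S| in sm *.
have [t ->] : exists t, m = (s + t)%N by exists (m - s)%N; lia.
case: k hk hq => // k' _ hq.
move: hq; set d := 1 + (k'.+1%:R - 1) * q => hq.
have -> : ((s + t) * k'.+1 - s = k' * s + k' * t + t)%N by lia.
have -> : (s + t - s = t)%N by lia.
rewrite subSS subn0.
have ha : (1 - q) ^+ k'.+1 + k'.+1%:R * q * (1 - q) ^+ k' = (1 - q) ^+ k' * d.
  by rewrite /d -natr1 exprS; ring.
have hx : 1 - k'.+1%:R * q / d = (1 - q) / d.
  by apply/(mulIf hq); rewrite mulrBl !divfK // mul1r /d -natr1; ring.
rewrite ha hx -[LHS]mulr_natr natrX !exprMn !exprVn !exprD !exprM.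
have ds : d ^+ s != 0 by rewrite expf_neq0.
have dt : d ^+ t != 0 by rewrite expf_neq0.
field.
by rewrite ds dt.
Qed.
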